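(* Let $\varphi:G\to T$ be an unramified hyperelliptic morphism. Then its dilation subgraph $C_\varphi\subseteq T$ is a cycle. Conversely, given a tree $T$ and a cycle $C\subseteq T$, there exists a unique unramified hyperelliptic morphism $\varphi:G\to T$ with dilation subgraph $C$.
   Context: Graphs: finite set $X$ with idempotent root map $r$ and involution $\iota$ fixing $r(X)$ pointwise; vertices, half-edges, edges (size-2 $\iota$-orbits), legs ($\iota$-fixed half-edges); $\mathrm{val}(v)$ = number of half-edges rooted at $v$; weights $g(v)\ge0$, $\chi(v)=2-2g(v)-\mathrm{val}(v)$. A harmonic morphism $\varphi:G\to T$ is a map $X(G)\to X(T)$ commuting with $r,\iota$, edges to edges or vertices, with $d_\varphi\ge0$ equal on halves of an edge, zero exactly on half-edges mapped to vertices, and $d_\varphi(v)=\sum_{h'\mapsto h,\,r(h')=v}d_\varphi(h')$ for every $h$ rooted at $\varphi(v)$; finite if $d_\varphi>0$ on half-edges; unramified if finite and $d_\varphi(v)\chi(\varphi(v))-\chi(v)=0$ for all $v$. A tree is a connected weighted graph of genus $0$. A hyperelliptic morphism is a finite harmonic morphism $\varphi:G\to T$ of degree $2$ onto a tree $T$ with $d_\varphi(v)=2$ whenever $g(v)>0$. Its dilation subgraph $C_\varphi$ is the set of $x\in X(T)$ with exactly one preimage. A subgraph is a subset of $X(T)$ preserved by $r$ and $\iota$; a cycle is a subgraph $C$ such that every vertex $v$ of $C$ has $2-2g(v)-\mathrm{val}_C(v)\le 0$ and $\mathrm{val}_C(v)$ even, where $\mathrm{val}_C(v)$ counts half-edges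 of $C$ rooted at $v$. Uniqueness is up to isomorphism over $T$. *)

(* Defs.v *)
From HB Require Import structures.
From mathcomp Require Import all_boot all_order all_algebra.
Set Implicit Arguments. Unset Strict Implicit. Unset Printing Implicit Defensive.
Import Order.TTheory GRing.Theory Num.Theory.

(* A (weighted) graph: a finite set X with an idempotent root map r and an
   involution iota fixing r(X) pointwise; weights are a function on X, only
   their values on vertices are ever used. *)
Record graph := Graph {
  gX : finType;
  groot : gX -> gX;
  giota : gX -> gX;
  gwt : gX -> nat;
  groot_idem : forall x, groot (groot x) = groot x;
  giota_inv : forall x, giota (giota x) = x;
  giota_root : forall x, giota (groot x) = groot x }.

Section GraphDefs.
Variable G : graph.
Implicit Types (x v h : gX G).

Definition vertex x : bool := groot x == x.
Definition half_edge x : bool := ~~ vertex x.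
Definition edge_half h : bool := half_edge h && (giota h != h).
Definition leg h : bool := half_edge h && (giota h == h).

Definition val v : nat := #|[set h | half_edge h & groot h == v]|.
Definition chi v : int := 2%:Z - 2%:Z * (gwt v)%:Z - (val v)%:Z.

Definition adj : rel (gX G) :=
  fun x y => (groot x == y) || (groot y == x) || (giota x == y).
Definition connected_graph : Prop :=
  (0 < #|[set v | vertex v]|)%N /\ forall x y, connect adj x y.

(* genus = first Betti number + sum of vertex weights *)
Definition genus : int :=
  (#|[set h | edge_half h]| %/ 2)%:Z - (#|[set v | vertex v]|)%:Z + 1
  + (\sum_(v | vertex v) gwt v)%:Z.

Definition is_tree : Prop := connected_graph /\ genus = 0.

Definition subgraph (C : {set gX G}) : Prop :=
  forall x, x \in C -> groot x \in C /\ giota x \in C.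
Definition valC (C : {set gX G}) v : nat :=
  #|[set h in C | half_edge h & groot h == v]|.
Definition is_cycle (C : {set gX G}) : Prop :=
  subgraph C /\
  forall v, v \in C -> vertex v ->
    (2%:Z - 2%:Z * (gwt v)%:Z - (valC C v)%:Z <= 0)%R /\ ~~ odd (valC C v).
End GraphDefs.

Section Morphisms.
Variables G T : graph.
Variable phi : gX G -> gX T.
Variable d : gX G -> nat.

Definition harmonic : Prop :=
  [/\ (forall x, phi (groot x) = groot (phi x)) /\
        (forall x, phi (giota x) = giota (phi x)),
      forall h, edge_half h -> vertex (phi h) || edge_half (phi h),
      forall h, half_edge h -> d (giota h) = d h,
      forall h, half_edge h -> (d h = 0%N <-> vertex (phi h)) &
      forall v, vertex v -> forall h, half_edge h -> groot h = phi v ->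
        d v = (\sum_(h' | [&& half_edge h', groot h' == v & phi h' == h]) d h')%N].

Definition finite_morphism : Prop :=
  harmonic /\ forall h, half_edge h -> (0 < d h)%N.

Definition unramified : Prop :=
  finite_morphism /\
  forall v, vertex v -> ((d v)%:Z * chi (phi v) - chi v = 0)%R.

Definition has_degree (n : nat) : Prop :=
  forall w, vertex w -> (\sum_(v | vertex v && (phi v == w)) d v)%N = n.

Definition hyperelliptic : Prop :=
  [/\ finite_morphism, has_degree 2, is_tree T &
      forall v, vertex v -> (0 < gwt v)%N -> d v = 2%N].

Definition unramified_hyperelliptic : Prop := hyperelliptic /\ unramified.

Definition dilation : {set gX T} := [set x | #|[set y | phi y == x]| == 1%N].
End Morphisms.

Definition iso_over (G1 G2 T : graph) (phi1 : gX G1 -> gX T) (d1 : gX G1 -> nat)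
  (phi2 : gX G2 -> gX T) (d2 : gX G2 -> nat) : Prop :=
  exists psi : gX G1 -> gX G2,
    [/\ bijective psi /\
        (forall x, psi (groot x) = groot (psi x)),
        forall x, psi (giota x) = giota (psi x),
        forall v, vertex v -> gwt (psi v) = gwt v,
        forall x, phi2 (psi x) = phi1 x &
        forall x, d2 (psi x) = d1 x].

(* Main.v *)
Require Import Defs.
From mathcomp Require Import all_boot all_order all_algebra.
From mathcomp Require Import zify.
Set Implicit Arguments. Unset Strict Implicit. Unset Printing Implicit Defensive.
Import Order.TTheory GRing.Theory Num.Theory.

Lemma F2_cases (u : 'F_2) : u = 0%R \/ u = 1%R.
Proof. case: u => [[|[|]]] //= H; [left|right]; exact: val_inj. Qed.

Lemma F2_add_xor (u v : 'F_2) : (u + v != 0)%R = ((u != 0%R) (+) (v != 0%R)).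
Proof. by case: (F2_cases u) => ->; case: (F2_cases v) => ->. Qed.

Lemma F2_addK (u : 'F_2) : (u + u = 0)%R.
Proof. case: (F2_cases u) => ->; [by rewrite addr0 | exact: val_inj]. Qed.

Section Basic.
Variable Gr : graph.
Implicit Types x y h v : gX Gr.

Lemma vertex_root x : vertex (groot x).
Proof. by rewrite /vertex groot_idem. Qed.

Lemma iota_vertex v : vertex v -> giota v = v.
Proof. by move/eqP=> <-; rewrite giota_root. Qed.

Lemma half_edge_iota h : half_edge (giota h) = half_edge h.
Proof.
rewrite /half_edge /vertex; congr negb; apply/eqP/eqP => E.
  by rewrite -[h]giota_inv -E giota_root E.
by rewrite -E giota_root E.
Qed.

Lemma root_neq h : half_edge h -> groot h != h.
Proof. by []. Qed.

Definition oriented h := edge_half h && (enum_rank h < enum_rank (giota h))%N.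

Lemma card_VH : #|[set v : gX Gr | vertex v]| + #|[set h : gX Gr | half_edge h]| = #|gX Gr|.
Proof.
rewrite -(cardsC [set v : gX Gr | vertex v]); congr (_ + _); apply: eq_card => x.
by rewrite !inE.
Qed.

Lemma card_oriented : (2 * #|[set h : gX Gr | oriented h]| = #|[set h : gX Gr | edge_half h]|)%N.
Proof.
have inj : injective (@giota Gr) by apply: (can_inj (@giota_inv Gr)).
rewrite -(cardsID [set h : gX Gr | oriented h] [set h : gX Gr | edge_half h]).
have -> : [set h : gX Gr | edge_half h] :&: [set h : gX Gr | oriented h] = [set h : gX Gr | oriented h].
  by apply/setP=> x; rewrite !inE /oriented; case: (edge_half x).
have -> : [set h : gX Gr | edge_half h] :\: [set h : gX Gr | oriented h] =
          (@giota Gr) @: [set h : gX Gr | oriented h].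
  apply/setP=> x; rewrite !inE; apply/andP/imsetP.
    case=> nO eh; exists (giota x); last by rewrite giota_inv.
    move: eh nO; rewrite inE /oriented /edge_half half_edge_iota giota_inv.
    case/andP=> -> ne; rewrite ne eq_sym ne /= -leqNgt leq_eqVlt => /orP[|->] //.
    by move=> /eqP/val_inj/enum_rank_inj E; rewrite E eqxx in ne.
  case=> y; rewrite inE /oriented /edge_half => /andP[/andP[hy ne] lt] ->.
  rewrite half_edge_iota hy giota_inv eq_sym ne /= -leqNgt ltnW //.
by rewrite card_imset // mul2n addnn.
Qed.

End Basic.

Section Tree.
Variable T : graph.
Local Open Scope ring_scope.

Definition Icol := ({x : gX T | half_edge x} + {x : gX T | oriented x})%type.

Definition colf (j : Icol) (x : gX T) : 'F_2 :=
  match j with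
  | inl h => (x == val h)%:R + (x == groot (val h))%:R
  | inr h => (x == val h)%:R + (x == giota (val h))%:R
  end.

Definition incM : 'M['F_2]_(#|gX T|, #|{: Icol}|) :=
  \matrix_(i, j) colf (enum_val j) (enum_val i).

Lemma sum_delta2 (F : gX T -> 'F_2) a b :
  \sum_x F x * ((x == a)%:R + (x == b)%:R) = F a + F b.
Proof.
rewrite (eq_bigr (fun x => F x * (x == a)%:R + F x * (x == b)%:R)); last first.
  by move=> x _; rewrite mulrDr.
rewrite big_split /=; congr (_ + _).
  rewrite (bigD1 a) //= eqxx mulr1 big1 ?addr0 // => x /negbTE ->; exact: mulr0.
rewrite (bigD1 b) //= eqxx mulr1 big1 ?addr0 // => x /negbTE ->; exact: mulr0.
Qed.

Lemma mulM (u : 'rV['F_2]_#|gX T|) j :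
  (u *m incM) 0 j =
  (fun f => match enum_val j with
   | inl h => f (val h) + f (groot (val h))
   | inr h => f (val h) + f (giota (val h)) end) (fun x => u 0 (enum_rank x)).
Proof.
rewrite mxE (reindex (@enum_rank _)) /=; last exact: onW_bij (@enum_rank_bij _).
under eq_bigr do rewrite mxE enum_rankK.
by case: (enum_val j) => h /=; rewrite sum_delta2.
Qed.

Lemma F2_eq_of_add0 (a b : 'F_2) : a + b = 0 -> a = b.
Proof. by case: (F2_cases a) => ->; case: (F2_cases b) => -> //; rewrite ?add0r ?addr0 => ->. Qed.

Lemma ker_const (u : 'rV['F_2]_#|gX T|) :
  connected_graph T -> u *m incM = 0 ->
  forall x y, u 0 (enum_rank x) = u 0 (enum_rank y).
Proof.
move=> [_ conn] uM.
set f := fun x => u 0 (enum_rank x).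
have Hj j : (u *m incM) 0 j = 0 by rewrite uM mxE.
have adjf x y : adj x y -> f x = f y.
  case/orP=> [/orP[]|] /eqP <-.
  - case hx: (half_edge x); last by move/negbFE: hx => /eqP ->.
    have := Hj (enum_rank (inl (exist _ x hx) : Icol)).
    by rewrite mulM enum_rankK /= => /F2_eq_of_add0.
  - case hy: (half_edge y); last by move/negbFE: hy => /eqP ->.
    have := Hj (enum_rank (inl (exist _ y hy) : Icol)).
    by rewrite mulM enum_rankK /= => /F2_eq_of_add0.
  - case hx: (edge_half x); last first.
      move: hx; rewrite /edge_half; case hh: (half_edge x) => /=.
        by move/negbFE/eqP ->.
      by move/negbFE: hh => hv _; rewrite iota_vertex.
    case: (ltngtP (enum_rank x) (enum_rank (giota x))) => [lt|gt|eq].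
    + have ox : oriented x by rewrite /oriented hx.
      have := Hj (enum_rank (inr (exist _ x ox) : Icol)).
      by rewrite mulM enum_rankK /= => /F2_eq_of_add0.
    + have ox : oriented (giota x).
        move: (hx); rewrite /oriented /edge_half half_edge_iota giota_inv => /andP[-> ne]; by rewrite eq_sym ne gt.
      have := Hj (enum_rank (inr (exist _ (giota x) ox) : Icol)).
      by rewrite mulM enum_rankK /= giota_inv => /F2_eq_of_add0.
    + by move/val_inj/enum_rank_inj: eq => <-.
move=> x y; have /connectP[p pth ->] := conn x y.
elim: p x pth => //= z p IH x /andP[axz pz].
by rewrite -IH //; exact: (adjf _ _ axz).
Qed.


Lemma tree_main : is_tree T ->
  (forall v : gX T, vertex v -> gwt v = 0%N) /\ row_full incM.
Proof.
move=> [[Vpos conn] g0].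
case/card_gt0P: (Vpos) => x0 _.
have kr : (\rank (kermx incM) <= 1)%N.
  have sub : (kermx incM <= (const_mx 1 : 'rV['F_2]_#|gX T|))%MS.
    apply/row_subP => i.
    set r := row i (kermx incM).
    have rM : r *m incM = 0 by apply/sub_kermxP; exact: row_sub.
    have cst := ker_const (conj Vpos conn) rM.
    have -> : r = r 0 (enum_rank x0) *: (const_mx 1 : 'rV['F_2]_#|gX T|).
      apply/rowP=> b; rewrite [RHS]mxE [X in _ * X]mxE mulr1.
      by rewrite -[b](enum_valK) (cst _ x0).
    exact: scalemx_sub.
  exact: leq_trans (mxrankS sub) (rank_leq_row _).
have rk1 := mxrank_ker incM.
have rkA : (#|gX T| - \rank incM <= 1)%N by rewrite -rk1.
have rk2 := rank_leq_col incM.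
have cVH := card_VH T.
have cI : #|{: Icol}| = (#|[set h : gX T | half_edge h]| + #|[set h : gX T | oriented h]|)%N.
  rewrite card_sum !card_sig; congr addn; apply: eq_card => x; by rewrite !inE.
have cO := card_oriented T.
move: g0; rewrite /genus -cO mulKn //.
set W := (\sum_(v | vertex v) gwt v)%N => g0.
rewrite /row_full.
move: (\rank incM) rk2 rkA => R rk2 rkA.
rewrite cI in rk2 *; rewrite -cVH in rkA.
have W0 : W = 0%N by lia.
split; last by apply/eqP; lia.
move=> v vv; move/eqP: W0; rewrite /W (bigD1 v) //=; lia.
Qed.

Lemma tree_cocycle : is_tree T -> forall a b : gX T -> bool,
  exists f : gX T -> bool,
    (forall h, half_edge h -> f h (+) f (groot h) = a h) /\
    (forall h, oriented h -> f h (+) f (giota h) = b h).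
Proof.
move=> /tree_main [_ full] a b.
pose c : 'rV['F_2]_#|{: Icol}| := \row_j (match enum_val j with
   | inl h => (a (val h))%:R | inr h => (b (val h))%:R end).
have /submxP[D cD] : (c <= incM)%MS by exact: submx_full.
move/matrixP: cD => cD'.
exists (fun x => D 0 (enum_rank x) != 0); split.
  move=> h hh; have := cD' 0 (enum_rank (inl (exist _ h hh) : Icol)).
  rewrite /= mulM !mxE enum_rankK /= => E.
  by rewrite -F2_add_xor -E; case: (a h).
move=> h hh; have := cD' 0 (enum_rank (inr (exist _ h hh) : Icol)).
rewrite /= mulM !mxE enum_rankK /= => E.
by rewrite -F2_add_xor -E; case: (b h).
Qed.

End Tree.

Lemma sum2_cases (I : finType) (A : {set I}) (F : I -> nat) :
  (forall i, 0 < F i) -> \sum_(i in A) F i = 2 ->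
  (#|A| = 1 /\ forall i, i \in A -> F i = 2) \/
  (#|A| = 2 /\ forall i, i \in A -> F i = 1).
Proof.
move=> Fp S.
have cA : #|A| <= 2.
  rewrite -S -sum1_card; apply: leq_sum => i _; exact: Fp.
case: (ltnP 0 #|A|) => [A0|].
2: by rewrite leqn0 cards_eq0 => /eqP A0; rewrite A0 big_set0 in S.
have Fi i : i \in A -> F i + \sum_(j in A :\ i) F j = 2.
  by move=> iA; rewrite (big_setD1 i iA) in S.
have cAi i : i \in A -> #|A :\ i| = (#|A| - 1)%N.
  by move=> iA; rewrite (cardsD1 i A) iA add1n subn1.
have lb i : i \in A -> #|A :\ i| <= \sum_(j in A :\ i) F j.
  move=> _; rewrite -sum1_card; apply: leq_sum => j _; exact: Fp.
case: (ltngtP #|A| 1) => [|c2|c1].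
- by rewrite ltnS leqn0 => /eqP c0; rewrite c0 in A0.
- right; have c : #|A| = 2 by lia.
  split=> // i iA; have := Fi i iA; have := lb i iA; have := cAi i iA; have := Fp i; lia.
- left; split=> // i iA; have := Fi i iA.
  have -> : A :\ i = set0 by apply/eqP; rewrite -cards_eq0 cAi // c1.
  by rewrite big_set0 addn0.
Qed.

Section Morph.
Variables (G T : graph) (phi : gX G -> gX T) (d : gX G -> nat).
Hypothesis H : unramified_hyperelliptic phi d.
Ltac unH := move: H; rewrite /unramified_hyperelliptic /hyperelliptic
  /unramified /finite_morphism /harmonic.

Lemma phi_root y : phi (groot y) = groot (phi y).
Proof. by unH; case=> [[[[[rc ic] ? ? ? ?] ?] ? ? ?] ?]. Qed.
Lemma phi_iota y : phi (giota y) = giota (phi y).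
Proof. by unH; case=> [[[[[rc ic] ? ? ? ?] ?] ? ? ?] ?]. Qed.
Lemma T_tree : is_tree T.
Proof. by unH; case=> [[? ? ? ?] ?]. Qed.
Lemma deg2 : has_degree phi d 2.
Proof. by unH; case=> [[? ? ? ?] ?]. Qed.
Lemma wt_d v : vertex v -> 0 < gwt v -> d v = 2.
Proof. by unH; case=> [[? ? ? W] ?]; apply: W. Qed.
Lemma unr v : vertex v -> ((d v)%:Z * chi (phi v) - chi v = 0)%R.
Proof. by unH; case=> [? [? U]]; apply: U. Qed.
Lemma harm_sum0 v : vertex v -> forall h, half_edge h -> groot h = phi v ->
  d v = (\sum_(h' | [&& half_edge h', groot h' == v & phi h' == h]) d h')%N.
Proof. by unH; case=> [[[[? ? ? ? W] ?] ? ? ?] ?]; apply: W. Qed.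
Lemma d_half_pos h : half_edge h -> 0 < d h.
Proof. by unH; case=> [[[? W] ? ? ?] ?]; apply: W. Qed.
Lemma d0_vertex h : half_edge h -> (d h = 0 <-> vertex (phi h)).
Proof. by unH; case=> [[[[? ? ? W ?] ?] ? ? ?] ?]; apply: W. Qed.
Lemma edge_to h : edge_half h -> vertex (phi h) || edge_half (phi h).
Proof. by unH; case=> [[[[? W ? ? ?] ?] ? ? ?] ?]; apply: W. Qed.

Lemma phi_vertex v : vertex v -> vertex (phi v).
Proof. by rewrite /vertex -phi_root => /eqP ->. Qed.

Lemma phi_half h : half_edge h -> half_edge (phi h).
Proof.
move=> hh; apply/negP => /(d0_vertex hh) d0.
by have := d_half_pos hh; rewrite d0.
Qed.

Lemma phi_vertexE y : vertex (phi y) = vertex y.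
Proof.
apply/idP/idP; last exact: phi_vertex.
by apply: contraLR => /phi_half.
Qed.

Lemma harm_sum v h : vertex v -> half_edge h -> groot h = phi v ->
  d v = (\sum_(h' | (groot h' == v) && (phi h' == h)) d h')%N.
Proof.
move=> vv hh rh; rewrite (harm_sum0 vv hh rh); apply: eq_bigl => y.
case E: (phi y == h); rewrite ?andbF ?andbT //.
move/eqP: E => E; rewrite [half_edge y]/half_edge -phi_vertexE E.
by move: hh; rewrite /half_edge => ->.
Qed.

Lemma d_pos y : 0 < d y.
Proof.
case hy: (half_edge y); first exact: d_half_pos.
move/negbFE: hy => vy; rewrite lt0n; apply/negP => /eqP d0.
have val0 : Defs.val y = 0.
  apply/eqP; rewrite cards_eq0; apply/eqP/setP => z; rewrite !inE.
  apply/negP => /andP[hz /eqP rz].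
  have := harm_sum vy (phi_half hz) _.
  rewrite -phi_root rz => /(_ erefl).
  rewrite (bigD1 z) /=; last by rewrite rz !eqxx.
  rewrite d0; have := d_half_pos hz; lia.
have := unr vy; rewrite d0 /chi val0.
move=> E.
have g1 : gwt y = 1 by lia.
by have := wt_d vy; rewrite g1 d0 => /(_ isT).
Qed.

Lemma fib_sum x : (\sum_(y | phi y == x) d y = 2)%N.
Proof.
case vx: (vertex x).
  rewrite -(deg2 vx); apply: eq_bigl => y.
  by case E: (phi y == x); rewrite ?andbF // -phi_vertexE (eqP E) vx.
have hx : half_edge x by rewrite /half_edge vx.
rewrite (partition_big (@groot G) (fun v => vertex v && (phi v == groot x))); last first.
  by move=> y /eqP E; rewrite vertex_root phi_root E eqxx.
rewrite -(deg2 (vertex_root x)); apply: eq_bigr => v /andP[vv /eqP pv].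
rewrite (harm_sum vv hx); last by rewrite pv.
by apply: eq_bigl => y; rewrite andbC.
Qed.


Definition fib x := [set y | phi y == x].
Local Notation dil := (dilation phi).

Lemma inD x : (x \in dil) = (#|fib x| == 1).
Proof. by rewrite inE. Qed.

Lemma fib_cases x :
  (#|fib x| = 1 /\ forall y, phi y = x -> d y = 2) \/
  (#|fib x| = 2 /\ forall y, phi y = x -> d y = 1).
Proof.
have S : \sum_(y in fib x) d y = 2.
  by rewrite -(fib_sum x); apply: eq_bigl => y; rewrite inE.
case: (sum2_cases d_pos S) => [[c F]|[c F]]; [left|right]; split => // y E;
  by apply: F; rewrite inE E.
Qed.

Lemma fib_card x : #|fib x| = if x \in dil then 1 else 2.
Proof. by rewrite inD; case: (fib_cases x) => [[-> _]|[-> _]]. Qed.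

Lemma d_val y : d y = if phi y \in dil then 2 else 1.
Proof.
rewrite inD; case: (fib_cases (phi y)) => [[-> F]|[-> F]]; exact: F.
Qed.

Lemma fib_iota x : fib (giota x) = (@giota G) @: fib x.
Proof.
apply/setP=> y; rewrite inE; apply/eqP/imsetP => [E|[z]].
  exists (giota y); last by rewrite giota_inv.
  by rewrite inE phi_iota E giota_inv.
by rewrite inE => /eqP <- ->; rewrite phi_iota.
Qed.

Lemma dil_iota x : (giota x \in dil) = (x \in dil).
Proof.
by rewrite !inD fib_iota card_imset //; apply: (can_inj (@giota_inv G)).
Qed.

Lemma fib_elem x : 0 < #|fib x|.
Proof. by rewrite fib_card; case: (x \in dil). Qed.

Lemma dil_root x : x \in dil -> groot x \in dil.
Proof.
move=> xD.
case vx: (vertex x); first by rewrite (eqP vx).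
have hx : half_edge x by rewrite /half_edge vx.
case/card_gt0P: (fib_elem x) => y; rewrite inE => /eqP px.
have hy : half_edge y by rewrite /half_edge -phi_vertexE px.
have vv := vertex_root y.
have := harm_sum vv hx; rewrite phi_root px => /(_ erefl).
rewrite (bigD1 y) /=; last by rewrite px !eqxx.
rewrite (d_val y) px xD (d_val (groot y)) phi_root px.
by case: (groot x \in dil); lia.
Qed.

Lemma root_inj x y1 y2 : groot x \notin dil -> phi y1 = x -> phi y2 = x ->
  groot y1 = groot y2 -> y1 = y2.
Proof.
move=> nD p1 p2 r12.
case vx: (vertex x).
  have v1 : vertex y1 by rewrite -phi_vertexE p1.
  have v2 : vertex y2 by rewrite -phi_vertexE p2.
  by rewrite -(eqP v1) -(eqP v2).
have hx : half_edge x by rewrite /half_edge vx.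
case: (eqVneq y1 y2) => // ne.
have := harm_sum (vertex_root y1) hx; rewrite phi_root p1 => /(_ erefl).
rewrite (bigD1 y1) /=; last by rewrite p1 !eqxx.
rewrite (bigD1 y2) /=; last by rewrite p2 r12 !eqxx eq_sym ne.
rewrite (d_val (groot y1)) phi_root p1 (negbTE nD).
have := d_pos y1; have := d_pos y2; lia.
Qed.

Lemma leg_fix y : giota (phi y) = phi y -> giota y = y.
Proof.
move=> lg.
case hy: (half_edge y); last by move/negbFE: hy => /iota_vertex.
apply/eqP; apply/negP => /negP ne.
have eh : edge_half y by rewrite /edge_half hy ne.
have := edge_to eh; rewrite /edge_half lg eqxx andbF orbF phi_vertexE.
by move: hy; rewrite /half_edge => /negbTE ->.
Qed.

Lemma val_over v : vertex v -> phi v \in dil ->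
  (Defs.val v + valC dil (phi v) = 2 * Defs.val (phi v))%N.
Proof.
move=> vv wD; set w := phi v.
have fw : fib w = [set v].
  move: wD; rewrite inD => /cards1P[v' E].
  have : v \in fib w by rewrite inE.
  by rewrite E inE => /eqP ->.
have e1 : Defs.val v =
    \sum_(h | half_edge h && (groot h == w)) (if h \in dil then 1 else 2).
  rewrite /Defs.val -sum1_card (partition_big phi (fun h => half_edge h && (groot h == w))) /=.
    apply: eq_bigr => h /andP[hh /eqP rh].
    rewrite -fib_card -sum1_card; apply: eq_bigl => y; rewrite !inE.
    case E: (phi y == h); rewrite ?andbF ?andbT //.
    have hy : half_edge y by rewrite /half_edge -phi_vertexE (eqP E).
    rewrite hy /=.
    have : groot y \in fib w by rewrite inE phi_root (eqP E) rh.
    by rewrite fw inE.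
  by move=> y; rewrite inE => /andP[hy /eqP ry]; rewrite phi_half // -phi_root ry eqxx.
have e2 : valC dil w = \sum_(h | half_edge h && (groot h == w)) (h \in dil : nat).
  rewrite /valC -sum1_card.
  rewrite (eq_bigl (fun h => (half_edge h && (groot h == w)) && (h \in dil))); last first.
    by move=> h; rewrite !inE andbC.
  by rewrite big_mkcondr /=; apply: eq_bigr => h _; case: (h \in dil).
have e3 : (2 * Defs.val w = \sum_(h | half_edge h && (groot h == w)) 2)%N.
  rewrite /Defs.val -sum1_card big_distrr /=.
  by apply: eq_bigl => h; rewrite inE.
rewrite e1 e2 e3 -big_split /=; apply: eq_bigr => h _.
by case: (h \in dil).
Qed.
End Morph.

Lemma part1 (G T : graph) (phi : gX G -> gX T) (d : gX G -> nat) :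
  unramified_hyperelliptic phi d -> is_cycle (dilation phi).
Proof.
move=> H; split.
  by move=> x xD; split; [exact: (dil_root H) | rewrite (dil_iota H)].
move=> w wD vw.
have [wt0 _] := tree_main (T_tree H).
case/card_gt0P: (fib_elem H w) => v; rewrite inE => /eqP pv.
have vv : vertex v by rewrite -(phi_vertexE H) pv.
have U := unr H vv.
have wD2 : phi v \in dilation phi by rewrite pv.
have VO := val_over H vv wD2.
rewrite (d_val H v) wD2 pv in U; rewrite pv in VO.
rewrite /chi (wt0 _ vw) in U.
have vc : valC (dilation phi) w = 2 * (1 + gwt v) by lia.
by rewrite vc oddM /=; split => //; lia.
Qed.

Section Std.
Variables (T : graph) (C : {set gX T}).
Hypothesis hsub : subgraph C.

Lemma hCi x : (giota x \in C) = (x \in C).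
Proof.
apply/idP/idP => [/hsub[_]|/hsub[_ //]]; by rewrite giota_inv.
Qed.
Lemma hCr x : x \in C -> groot x \in C.
Proof. by case/hsub. Qed.

Definition okp (p : gX T * bool) := (p.1 \in C) ==> ~~ p.2.
Definition SX := {p : gX T * bool | okp p}.

Lemma mkS_ok x b : okp (x, (x \notin C) && b).
Proof. by rewrite /okp /=; case: (x \in C). Qed.

Definition mkS x b : SX := exist _ (x, (x \notin C) && b) (mkS_ok x b).

Definition sroot (p : SX) := mkS (groot (val p).1) (val p).2.
Definition siota (p : SX) := mkS (giota (val p).1) (val p).2.

Lemma S_eta (p : SX) : p = mkS (val p).1 (val p).2.
Proof.
apply: val_inj; case: p => [[x b]] /=; rewrite /okp /=.
by case: (x \in C) => //= /negbTE ->.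
Qed.

Lemma sroot_idem p : sroot (sroot p) = sroot p.
Proof. by apply: val_inj; rewrite /= groot_idem andbA andbb. Qed.

Lemma siota_inv p : siota (siota p) = p.
Proof.
rewrite [RHS]S_eta; apply: val_inj; rewrite /= giota_inv hCi.
by case: (_ \in C); rewrite ?andbb.
Qed.

Lemma siota_root p : siota (sroot p) = sroot p.
Proof. by apply: val_inj; rewrite /= giota_root andbA andbb. Qed.

Definition gwtS (p : SX) : nat :=
  if (val p).1 \in C then ((valC C (val p).1)./2 - 1)%N else 0%N.

Definition Sg : graph := @Graph _ sroot siota gwtS sroot_idem siota_inv siota_root.

Definition phiS (p : gX Sg) : gX T := (val p).1.
Definition dS (p : gX Sg) : nat := if phiS p \in C then 2 else 1.

Lemma phiS_mk x b : phiS (mkS x b) = x.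
Proof. by []. Qed.

Lemma S_vertexE (p : gX Sg) : vertex p = vertex (phiS p).
Proof.
case: p => [[x b] ok]; rewrite /vertex /phiS /=; apply/eqP/eqP.
  by move/(congr1 (fun q => (val q).1)).
move=> E; apply: val_inj; rewrite /= E; move: ok; rewrite /okp /=.
by case: (x \in C) => //= /negbTE ->.
Qed.

Lemma S_halfE (p : gX Sg) : half_edge p = half_edge (phiS p).
Proof. by rewrite /half_edge S_vertexE. Qed.


Lemma sum_fiber x (P : pred (gX Sg)) (F : gX Sg -> nat) :
  \sum_(p | (phiS p == x) && P p) F p =
  \sum_(b : bool | okp (x, b) && P (mkS x b)) F (mkS x b).
Proof.
rewrite (reindex_onto (mkS x) (fun p : gX Sg => (val p).2)); last first.
  by move=> p /andP[/eqP <- _]; rewrite /phiS -S_eta.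
apply: eq_bigl => b; rewrite phiS_mk eqxx /= /okp /=.
by case: (x \in C); case: b => //=; rewrite ?andbT ?andbF.
Qed.

Lemma S_fib x : #|[set p : gX Sg | phiS p == x]| = if x \in C then 1 else 2.
Proof.
rewrite -sum1_card (eq_bigl (fun p => (phiS p == x) && true)); last first.
  by move=> p; rewrite inE andbT.
rewrite sum_fiber big_mkcond big_bool /= /okp /=.
by case: (x \in C).
Qed.

Lemma S_dil : dilation phiS = C.
Proof. by apply/setP => x; rewrite inE S_fib; case: (x \in C). Qed.

Lemma sum_at (v : gX Sg) (h : gX T) (F : gX Sg -> nat) :
  vertex v -> half_edge h -> groot h = phiS v ->
  \sum_(p | (groot p == v) && (phiS p == h)) F p =
  if phiS v \in C then \sum_(b | okp (h, b)) F (mkS h b) else F (mkS h (val v).2).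
Proof.
move=> vv hh rh.
rewrite (eq_bigl (fun p => (phiS p == h) && (groot p == v))); last first.
  by move=> p; rewrite andbC.
rewrite sum_fiber.
have vE := S_eta v.
case vC: (phiS v \in C).
  apply: eq_bigl => b; rewrite [v in _ == v]vE /=.
  rewrite -val_eqE /= rh vC /=.
  by rewrite /phiS eqxx andbT.
have hC : h \notin C by apply/negP => /hCr; rewrite rh vC.
rewrite (eq_bigl (fun b => b == (val v).2)); first by rewrite big_pred1_eq.
move=> b; rewrite /okp /= (negbTE hC) /= [v in _ == v]vE -val_eqE /= rh vC /=.
  by rewrite hC /= xpair_eqE /phiS eqxx.
Qed.


Lemma S_val (v : gX Sg) : vertex v ->
  (Defs.val v + (if phiS v \in C then valC C (phiS v) else 0) =
   (if phiS v \in C then 2 else 1) * Defs.val (phiS v))%N.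
Proof.
move=> vv; set w := phiS v.
have e1 : Defs.val v =
    \sum_(h | half_edge h && (groot h == w)) (if w \in C then (if h \in C then 1 else 2) else 1).
  rewrite /Defs.val -sum1_card (partition_big phiS (fun h => half_edge h && (groot h == w))) /=.
    apply: eq_bigr => h /andP[hh /eqP rh].
    rewrite (eq_bigl (fun p => (groot p == v) && (phiS p == h))); last first.
      move=> p; rewrite !inE; case E: (phiS p == h); rewrite ?andbF ?andbT //.
      by rewrite S_halfE (eqP E) hh.
    rewrite sum_at // big_mkcond big_bool /= /okp /=.
    by case: (w \in C); case: (h \in C).
  move=> p; rewrite inE => /andP[hp /eqP rp].
  by rewrite -S_halfE hp /= /w -rp.
have e2 : valC C w = \sum_(h | half_edge h && (groot h == w)) (h \in C : nat).
  rewrite /valC -sum1_card.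
  rewrite (eq_bigl (fun h => (half_edge h && (groot h == w)) && (h \in C))); last first.
    by move=> h; rewrite !inE andbC.
  by rewrite big_mkcondr /=; apply: eq_bigr => h _; case: (h \in C).
have e3 : forall k, (k * Defs.val w = \sum_(h | half_edge h && (groot h == w)) k)%N.
  move=> k; rewrite /Defs.val -sum1_card big_distrr /=.
  rewrite (eq_bigr (fun _ => k)); last by move=> i _; rewrite muln1.
  by apply: eq_bigl => h; rewrite inE.
rewrite e1 e3; case wC: (w \in C).
  rewrite e2 -big_split /=; apply: eq_bigr => h _.
  by case: (h \in C).
by rewrite addn0.
Qed.

Lemma S_uh : is_tree T -> is_cycle C -> unramified_hyperelliptic phiS dS.
Proof.
move=> tT [_ cyc].
have [wt0 _] := tree_main tT.
have harm : harmonic phiS dS.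
  split.
  - by split.
  - move=> p; rewrite /edge_half S_halfE => /andP[hp ne].
    apply/orP; right; rewrite hp /=; apply: contra ne => /eqP E.
    by rewrite [p in _ == p]S_eta /= /siota E.
  - by move=> h _; rewrite /dS /phiS /= hCi.
  - move=> h hh; rewrite S_halfE in hh; split; first by rewrite /dS; case: (_ \in C).
    by move=> vh; move: hh; rewrite /half_edge vh.
  - move=> v vv h hh rh.
    rewrite (eq_bigl (fun p => (groot p == v) && (phiS p == h))); last first.
      move=> p; case E: (phiS p == h); rewrite ?andbF ?andbT //.
      by rewrite S_halfE (eqP E) hh.
    rewrite sum_at // /dS; case vC: (phiS v \in C).
      rewrite big_mkcond big_bool /= /okp /=.
      by case: (h \in C).
    rewrite phiS_mk; case hC: (h \in C) => //.
    by move/hCr: hC; rewrite rh vC.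
have fin : finite_morphism phiS dS.
  by split => // h _; rewrite /dS; case: (_ \in C).
split; split => //.
- move=> w vw.
  rewrite (eq_bigl (fun p => (phiS p == w) && true)); last first.
    by move=> p; rewrite S_vertexE andbT; case E: (phiS p == w); rewrite ?andbF ?(eqP E) ?vw.
  rewrite sum_fiber big_mkcond big_bool /= /okp /= /dS /=.
  by case: (w \in C).
- move=> v _; rewrite /= /gwtS /dS /phiS /=.
  by case: (_ \in C).
- move=> v vv.
  have SV := S_val vv.
  have vw : vertex (phiS v) by rewrite -S_vertexE.
  rewrite /chi /= /gwtS /dS -/(phiS v) (wt0 _ vw).
  move: SV; case wC: (phiS v \in C) => SV; last by lia.
  have [c1 c2] := cyc _ wC vw.
  rewrite (wt0 _ vw) in c1.
  move: c1 c2 SV; set k := valC C (phiS v) => c1 c2 SV.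
  have [m km] : exists m, k = 2 * m.
    by exists k./2; rewrite -[k in LHS]odd_double_half (negbTE c2) add0n -mul2n.
  rewrite km mul2n doubleK; rewrite km in c1 SV; lia.
Qed.

End Std.

Lemma xor_shift a b c e : a (+) b = c (+) e -> c (+) b = e (+) a.
Proof. by case: a; case: b; case: c; case: e. Qed.

Section Sheet.
Variables (G T : graph) (phi : gX G -> gX T) (d : gX G -> nat).
Hypothesis H : unramified_hyperelliptic phi d.
Local Notation C := (dilation phi).

Lemma fibE x y1 y2 : x \notin C -> phi y1 = x -> phi y2 = x -> y1 != y2 ->
  fib phi x = [set y1; y2].
Proof.
move=> xC p1 p2 ne; apply/eqP; rewrite eq_sym eqEcard cards2 ne (fib_card H) (negbTE xC) leqnn andbT.
by apply/subsetP => z; rewrite !inE => /orP[] /eqP ->; rewrite ?p1 ?p2.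
Qed.

Lemma fib_other x y1 : x \notin C -> phi y1 = x -> exists y2, phi y2 = x /\ y1 != y2.
Proof.
move=> xC p1; have : #|fib phi x| = 2 by rewrite (fib_card H) (negbTE xC).
move/eqP/cards2P => [a [b [ne E]]].
have : y1 \in fib phi x by rewrite inE p1.
rewrite E !inE => /orP[] /eqP ->.
  have : b \in fib phi x by rewrite E !inE eqxx orbT.
  by rewrite inE => /eqP pb; exists b.
have : a \in fib phi x by rewrite E !inE eqxx.
by rewrite inE => /eqP pa; exists a; rewrite eq_sym.
Qed.

Definition tt_ (y : gX G) : bool :=
  [exists z, (phi z == phi y) && (enum_rank z < enum_rank y)].

Lemma tt_neq y1 y2 : phi y1 \notin C -> phi y1 = phi y2 -> y1 != y2 -> tt_ y1 != tt_ y2.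
Proof.
move=> xC p12 ne.
have E := fibE xC erefl (esym p12) ne.
have key y y' : fib phi (phi y1) = [set y; y'] -> phi y = phi y1 -> y != y' ->
    tt_ y = (enum_rank y' < enum_rank y).
  move=> Ey py nyy; apply/existsP/idP => [[z /andP[pz lt]]|lt].
    have : z \in fib phi (phi y1) by rewrite inE -py.
    rewrite Ey !inE => /orP[] /eqP zE; first by rewrite zE ltnn in lt.
    by rewrite -zE.
  exists y'; rewrite lt andbT py.
  have : y' \in fib phi (phi y1) by rewrite Ey !inE eqxx orbT.
  by rewrite inE.
rewrite (key y1 y2) // (key y2 y1) //; last by rewrite eq_sym.
  case: (ltngtP (enum_rank y1) (enum_rank y2)) => // /val_inj/enum_rank_inj eq.
  by rewrite eq eqxx in ne.
by rewrite E setUC.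
Qed.

Lemma tt_fib y1 y2 : phi y1 \notin C -> phi y1 = phi y2 -> tt_ y1 = tt_ y2 -> y1 = y2.
Proof.
move=> xC p12 tE; apply/eqP; apply/negPn/negP => ne.
by have := tt_neq xC p12 ne; rewrite tE eqxx.
Qed.


Lemma neq_negb (a b : bool) : a != b -> b = ~~ a.
Proof. by case: a; case: b. Qed.

Lemma inv_iota y y' : phi y \notin C -> phi y = phi y' ->
  tt_ (giota y) (+) tt_ y = tt_ (giota y') (+) tt_ y'.
Proof.
move=> xC p; case: (eqVneq y y') => [-> //|ne].
have iC : phi (giota y) \notin C by rewrite (phi_iota H) (dil_iota H).
have ne' : giota y != giota y'.
  by apply: contra ne => /eqP E; rewrite -[y]giota_inv E giota_inv.
have pi : phi (giota y) = phi (giota y') by rewrite !(phi_iota H) p.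
rewrite (neq_negb (tt_neq xC p ne)) (neq_negb (tt_neq iC pi ne')).
by case: (tt_ y); case: (tt_ (giota y)).
Qed.

Lemma inv_root y y' : groot (phi y) \notin C -> phi y = phi y' ->
  tt_ (groot y) (+) tt_ y = tt_ (groot y') (+) tt_ y'.
Proof.
move=> rC p; case: (eqVneq y y') => [-> //|ne].
have xC : phi y \notin C by apply: contra rC; exact: (dil_root H).
have rC' : phi (groot y) \notin C by rewrite (phi_root H).
have ne' : groot y != groot y'.
  by apply: contra ne => /eqP E; apply/eqP; apply: (root_inj H rC) => //; rewrite p.
have pr : phi (groot y) = phi (groot y') by rewrite !(phi_root H) p.
rewrite (neq_negb (tt_neq xC p ne)) (neq_negb (tt_neq rC' pr ne')).
by case: (tt_ y); case: (tt_ (groot y)).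
Qed.

Definition aa (x : gX T) : bool :=
  [exists y, (phi y == x) && (tt_ (groot y) (+) tt_ y)] && (groot x \notin C).
Definition bb (x : gX T) : bool :=
  [exists y, (phi y == x) && (tt_ (giota y) (+) tt_ y)] && (x \notin C).

Lemma aa_val y : groot (phi y) \notin C -> aa (phi y) = tt_ (groot y) (+) tt_ y.
Proof.
move=> rC; rewrite /aa rC andbT; apply/existsP/idP => [[z /andP[/eqP pz v]]|v].
  by rewrite (inv_root rC (esym pz)).
by exists y; rewrite eqxx.
Qed.

Lemma bb_val y : phi y \notin C -> bb (phi y) = tt_ (giota y) (+) tt_ y.
Proof.
move=> xC; rewrite /bb xC andbT; apply/existsP/idP => [[z /andP[/eqP pz v]]|v].
  by rewrite (inv_iota xC (esym pz)).
by exists y; rewrite eqxx.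
Qed.

Variable f : gX T -> bool.
Hypothesis Fa : forall h, half_edge h -> f h (+) f (groot h) = aa h.
Hypothesis Fb : forall h, oriented h -> f h (+) f (giota h) = bb h.

Definition ss y := tt_ y (+) f (phi y).

Lemma R1 y : half_edge y -> groot (phi y) \notin C -> ss (groot y) = ss y.
Proof.
move=> hy rC; rewrite /ss (phi_root H).
apply: xor_shift; rewrite Fa ?aa_val //; exact: (phi_half H).
Qed.

Lemma R2 y : phi y \notin C -> ss (giota y) = ss y.
Proof.
move=> xC; rewrite /ss (phi_iota H).
case vx: (vertex (phi y)).
  have vy : vertex y by rewrite -(phi_vertexE H) vx.
  by rewrite (iota_vertex vy) (iota_vertex vx).
case: (eqVneq (giota (phi y)) (phi y)) => [lg|ne].
  by rewrite (leg_fix H lg) lg.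
have eh : edge_half (phi y) by rewrite /edge_half /half_edge vx ne.
case: (ltngtP (enum_rank (phi y)) (enum_rank (giota (phi y)))) => [lt|gt|eq].
- apply: xor_shift; rewrite Fb ?bb_val //; by rewrite /oriented eh.
- have ox : oriented (giota (phi y)).
    move: eh; rewrite /oriented /edge_half half_edge_iota giota_inv => /andP[-> ne2].
    by rewrite eq_sym ne2 gt.
  have E : f (giota (phi y)) (+) f (phi y) = tt_ y (+) tt_ (giota y).
    have := Fb ox; rewrite giota_inv => ->.
    have := bb_val (y := giota y); rewrite (phi_iota H) giota_inv => -> //.
    by rewrite (dil_iota H).
  by symmetry; apply: xor_shift; exact: E.
- by move/val_inj/enum_rank_inj: eq => eq; rewrite -eq eqxx in ne.
Qed.


Variable hsub : subgraph C.
Definition psi (y : gX G) : gX (Sg hsub) := mkS C (phi y) (ss y).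

Lemma psi_phi y : phiS (psi y) = phi y.
Proof. by []. Qed.

Lemma psi_d y : dS (psi y) = d y.
Proof. by rewrite /dS psi_phi (d_val H y). Qed.

Lemma psi_root y : psi (groot y) = groot (psi y).
Proof.
apply: val_inj => /=; rewrite (phi_root H); congr pair.
case rC: (groot (phi y) \in C) => //=.
have xC : phi y \notin C by apply/negP => /(dil_root H); rewrite rC.
rewrite xC /=; case hy: (half_edge y); first by apply: R1 => //; rewrite rC.
by move/negbFE: hy => /eqP ->.
Qed.

Lemma psi_iota y : psi (giota y) = giota (psi y).
Proof.
apply: val_inj => /=; rewrite (phi_iota H) (dil_iota H); congr pair.
case xC: (phi y \in C) => //=; apply: R2; by rewrite xC.
Qed.

Lemma psi_inj : injective psi.
Proof.
move=> y1 y2 E.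
have p12 : phi y1 = phi y2 by rewrite -!psi_phi E.
case xC: (phi y1 \in C).
  have : #|fib phi (phi y1)| == 1 by rewrite -inD.
  case/cards1P => z Ez.
  have : y1 \in fib phi (phi y1) by rewrite inE.
  have : y2 \in fib phi (phi y1) by rewrite inE p12.
  by rewrite Ez !inE => /eqP -> /eqP ->.
have := congr1 (fun p => (val p).2) E; rewrite /= -p12 xC /= /ss -p12 => tE.
have : tt_ y1 = tt_ y2 by move: tE; case: (f _); case: (tt_ y1); case: (tt_ y2).
by apply: tt_fib; rewrite ?xC.
Qed.

Lemma psi_bij : bijective psi.
Proof.
apply: inj_card_bij; first exact: psi_inj.
have sur : forall p : gX (Sg hsub), p \in codom psi.
  move=> p; rewrite [p]S_eta; set x := (val p).1; set b := (val p).2.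
  have hok : okp C (x, b) := valP p.
  case xC: (x \in C).
    case/card_gt0P: (fib_elem H x) => y; rewrite inE => /eqP py.
    have -> : mkS C x b = psi y.
      apply: val_inj => /=; rewrite py xC.
      by [].
    exact: codom_f.
  clear hok; case/card_gt0P: (fib_elem H x) => y1; rewrite inE => /eqP p1.
  have [y2 [p2 ne]] := fib_other (y1 := y1) (negbT xC) p1.
  have sne : ss y1 != ss y2.
    rewrite /ss p1 p2.
    have := tt_neq (y1 := y1) (y2 := y2); rewrite p1 p2 xC => /(_ isT erefl ne).
    by case: (f x); case: (tt_ y1); case: (tt_ y2).
  case sb: (ss y1 == b).
    have -> : mkS C x b = psi y1 by apply: val_inj => /=; rewrite p1 (eqP sb).
    exact: codom_f.
  have -> : mkS C x b = psi y2.
    apply: val_inj => /=; rewrite p2; congr (_, _ && _).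
    by move: sne sb; case: (ss y1); case: (ss y2); case: b.
  exact: codom_f.
rewrite -(card_codom psi_inj); apply: subset_leq_card; apply/subsetP => p _.
exact: sur.
Qed.

End Sheet.

Lemma iso_S (G T : graph) (phi : gX G -> gX T) (d : gX G -> nat)
  (H : unramified_hyperelliptic phi d) (C : {set gX T}) (hsub : subgraph C) :
  dilation phi = C ->
  exists psi0 : gX G -> gX (Sg hsub),
    [/\ bijective psi0, (forall x, psi0 (groot x) = groot (psi0 x)),
        (forall x, psi0 (giota x) = giota (psi0 x)),
        (forall x, phiS (psi0 x) = phi x) & (forall x, dS (psi0 x) = d x)].
Proof.
move=> hD; subst C.
have [f [Fa Fb]] := tree_cocycle (T_tree H) (aa phi) (bb phi).
exists (psi f hsub); split.
- exact: (psi_bij H f hsub).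
- exact: (psi_root H Fa hsub).
- exact: (psi_iota H Fb hsub).
- exact: (psi_phi f hsub).
- exact: (psi_d H f hsub).
Qed.

Lemma vertex_iso (G1 G2 : graph) (f : gX G1 -> gX G2) : injective f ->
  (forall x, f (groot x) = groot (f x)) -> forall x, vertex (f x) = vertex x.
Proof. by move=> finj fr x; rewrite /vertex -fr (inj_eq finj). Qed.

Lemma val_iso (G1 G2 : graph) (f : gX G1 -> gX G2) : bijective f ->
  (forall x, f (groot x) = groot (f x)) -> forall v, Defs.val (f v) = Defs.val v.
Proof.
move=> [g fg gf] fr v.
have finj : injective f := can_inj fg.
rewrite /Defs.val -(card_imset _ finj); apply: eq_card => h.
rewrite -[h]gf (mem_imset _ _ finj) !inE /half_edge (vertex_iso finj fr).
by rewrite -fr (inj_eq finj).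
Qed.

Theorem proposition5p19 :
  (forall (G T : graph) (phi : gX G -> gX T) (d : gX G -> nat),
     unramified_hyperelliptic phi d -> is_cycle (dilation phi))
  /\
  (forall (T : graph) (C : {set gX T}),
     is_tree T -> is_cycle C ->
     (exists (G : graph) (phi : gX G -> gX T) (d : gX G -> nat),
        unramified_hyperelliptic phi d /\ dilation phi = C)
     /\
     (forall (G1 G2 : graph) (phi1 : gX G1 -> gX T) (d1 : gX G1 -> nat)
             (phi2 : gX G2 -> gX T) (d2 : gX G2 -> nat),
        unramified_hyperelliptic phi1 d1 -> dilation phi1 = C ->
        unramified_hyperelliptic phi2 d2 -> dilation phi2 = C ->
        iso_over phi1 d1 phi2 d2)).
Proof.
split; first by move=> G T phi d H; exact: part1 H.
move=> T C tT cyc; have hsub : subgraph C := cyc.1.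
split.
  exists (Sg hsub), (@phiS _ _ hsub), (@dS _ _ hsub); split.
    exact: S_uh.
  exact: S_dil.
move=> G1 G2 phi1 d1 phi2 d2 H1 D1 H2 D2.
have [p1 [b1 r1 i1 ph1 dd1]] := iso_S H1 hsub D1.
have [p2 [b2 r2 i2 ph2 dd2]] := iso_S H2 hsub D2.
case: (b1) => g1 k1 k1'; case: (b2) => g2 k2 k2'.
set ps := fun x => g2 (p1 x).
have bps : bijective ps.
  by exists (fun y => g1 (p2 y)) => x; rewrite /ps ?k2' ?k1 ?k1' ?k2.
have rps x : ps (groot x) = groot (ps x).
  by apply: (can_inj k2); rewrite /ps k2' r2 k2' r1.
have ips x : ps (giota x) = giota (ps x).
  by apply: (can_inj k2); rewrite /ps k2' i2 k2' i1.
have pps x : phi2 (ps x) = phi1 x by rewrite -ph2 /ps k2' ph1.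
have dps x : d2 (ps x) = d1 x by rewrite -dd2 /ps k2' dd1.
exists ps; split => //.
move=> v vv.
have pinj : injective ps by case: bps => g h _; exact: can_inj h.
have vv2 : vertex (ps v) by rewrite (vertex_iso pinj rps).
have U1 := unr H1 vv; have U2 := unr H2 vv2.
rewrite pps dps /chi (val_iso bps rps) in U2.
rewrite /chi in U1; lia.
Qed.
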